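(* Let $A,B\in\mathbb{R}^{n\times n}$ be real symmetric with normalizations $\widetilde A,\widetilde B$ satisfying $\mathrm{spec}(\widetilde A),\mathrm{spec}(\widetilde B)\subset[-1,1]$, and let $\eta>0$. Then there is a constant $C_T\le2$ such that for all $k\ge0$, \[ |\mathrm{tr}\,T_k(\widetilde A)-\mathrm{tr}\,T_k(\widetilde B)|\le n\,C_T\,k^2\,\|\widetilde A-\widetilde B\|_2, \] and for any $K\ge1$, \[ \|\phi_K(A)-\phi_K(B)\|_2\le\frac{n}{\|[s_0,\dots,s_{K-1}]\|_2}\Big(\sum_{k=0}^{K-1}e^{-2\eta k}C_T^2k^4\Big)^{1/2}\|\widetilde A-\widetilde B\|_2=\mathcal{O}\big(n\,\eta^{-5/2}\,\|\widetilde A-\widetilde B\|_2\big), \] where $s_k=s_k(A)$.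
   Context: For a real symmetric $M$, $\widetilde M=(M-mI)/r$ with $m=\tfrac12(\lambda_{\max}(M)+\lambda_{\min}(M))$, $r=(1+\varepsilon_{\mathrm{rel}})\tfrac12(\lambda_{\max}(M)-\lambda_{\min}(M))$, fixed $\varepsilon_{\mathrm{rel}}>0$. $T_k$ are Chebyshev polynomials of the first kind ($T_0=1$, $T_1(x)=x$, $T_{k+1}=2xT_k-T_{k-1}$). $s_k(M)=e^{-\eta k}\mathrm{tr}(T_k(\widetilde M))$ and $\phi_K(M)=[s_0(M),\dots,s_{K-1}(M)]/\|[s_0(M),\dots,s_{K-1}(M)]\|_2$. $\|\cdot\|_2$ denotes the spectral norm for matrices and Euclidean norm for vectors. *)

(* Defs.v *)
From HB Require Import structures.
From mathcomp Require Import all_boot all_order all_algebra.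
From mathcomp Require Import all_classical all_reals all_analysis.
Set Implicit Arguments. Unset Strict Implicit. Unset Printing Implicit Defensive.
Import Order.TTheory GRing.Theory Num.Theory.
Local Open Scope classical_set_scope.
Local Open Scope ring_scope.

Section Defs.
Variable R : realType.

Fixpoint cheb_pair (k : nat) : {poly R} * {poly R} :=
  match k with
  | 0%N => (1, 'X)
  | k'.+1 => let p := cheb_pair k' in (p.2, 2%:P * 'X * p.2 - p.1)
  end.
Definition cheb (k : nat) : {poly R} := (cheb_pair k).1.

Lemma cheb0 : cheb 0 = 1. Proof. by []. Qed.
Lemma cheb1 : cheb 1 = 'X. Proof. by []. Qed.
Lemma chebSS k : cheb k.+2 = 2%:P * 'X * cheb k.+1 - cheb k.
Proof. by []. Qed.

Variable n : nat.  (* matrices are (n.+1) x (n.+1) *)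

Definition spec (M : 'M[R]_n.+1) : set R := [set a | eigenvalue M a].
Definition lambda_max (M : 'M[R]_n.+1) : R := sup (spec M).
Definition lambda_min (M : 'M[R]_n.+1) : R := inf (spec M).

Definition is_symmetric (M : 'M[R]_n.+1) : Prop := M^T = M.

Definition norm_center (M : 'M[R]_n.+1) : R :=
  (lambda_max M + lambda_min M) / 2.
Definition norm_radius (eps : R) (M : 'M[R]_n.+1) : R :=
  (1 + eps) * ((lambda_max M - lambda_min M) / 2).
Definition normalize (eps : R) (M : 'M[R]_n.+1) : 'M[R]_n.+1 :=
  (norm_radius eps M)^-1 *: (M - (norm_center M)%:M).

Definition cvnorm (x : 'cV[R]_n.+1) : R := Num.sqrt (\sum_i x i 0 ^+ 2).
Definition spnorm (M : 'M[R]_n.+1) : R :=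
  sup [set cvnorm (M *m x) | x in [set x : 'cV[R]_n.+1 | cvnorm x = 1]].

Definition chebmx (k : nat) (M : 'M[R]_n.+1) : 'M[R]_n.+1 := horner_mx M (cheb k).

Definition s_coef (eps eta : R) (M : 'M[R]_n.+1) (k : nat) : R :=
  expR (- eta * k%:R) * \tr (chebmx k (normalize eps M)).

End Defs.

Definition rvnorm (R : realType) (K : nat) (v : 'rV[R]_K) : R :=
  Num.sqrt (\sum_i v 0 i ^+ 2).

Definition s_vec (R : realType) (n : nat) (eps eta : R) (M : 'M[R]_n.+1) (K : nat)
  : 'rV[R]_K := \row_(k < K) s_coef eps eta M k.

Definition phi (R : realType) (n : nat) (eps eta : R) (M : 'M[R]_n.+1) (K : nat)
  : 'rV[R]_K := (rvnorm (s_vec eps eta M K))^-1 *: s_vec eps eta M K.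

(* Main.v *)
Require Import Defs.
From HB Require Import structures.
From mathcomp Require Import all_boot all_order all_algebra.
From mathcomp Require Import all_classical all_reals all_analysis.
From mathcomp Require Import complex.
From mathcomp Require Import ring lra.
Import Order.TTheory GRing.Theory Num.Theory.
Local Open Scope ring_scope.

Module Helpers.
Set Implicit Arguments. Unset Strict Implicit. Unset Printing Implicit Defensive.
Local Open Scope ring_scope.
Local Open Scope classical_set_scope.
Local Open Scope ring_scope.
Section Cheb.
Variable R : realType.

Lemma cheb_cos_aux (t : R) k :
  (cheb R k).[cos t] = cos (k%:R * t) /\ (cheb R k.+1).[cos t] = cos (k.+1%:R * t).
Proof.
elim: k => [|k [IH1 IH2]].
  by rewrite cheb0 cheb1 hornerC hornerX mul0r cos0 mul1r.
split => //.
rewrite chebSS !hornerE IH1 IH2.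
have -> : k.+2%:R * t = k.+1%:R * t + t by rewrite -[k.+2]addn1 natrD mulrDl mul1r.
have -> : k%:R * t = k.+1%:R * t - t by rewrite -[k.+1]addn1 natrD mulrDl mul1r addrK.
rewrite cosB cosD; ring.
Qed.

Lemma cheb_cos (t : R) k : (cheb R k).[cos t] = cos (k%:R * t).
Proof. by case: (cheb_cos_aux t k). Qed.

Lemma sin_mul_le (x : R) k : `|sin (k%:R * x)| <= k%:R * `|sin x|.
Proof.
elim: k => [|k IH]; first by rewrite mul0r sin0 normr0 mul0r.
have -> : k.+1%:R * x = k%:R * x + x by rewrite -[k.+1]addn1 natrD mulrDl mul1r.
rewrite sinD -[k.+1]addn1 natrD mulrDl mul1r.
apply: (le_trans (ler_normD _ _)); rewrite !normrM.
apply: lerD.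
  apply: (le_trans (ler_wpM2r (normr_ge0 _) IH)).
  by rewrite -[X in _ <= X]mulr1; apply: ler_wpM2l; [apply: mulr_ge0 | apply: cos_max].
by rewrite -[X in _ <= X]mul1r; apply: ler_wpM2r; [| apply: cos_max].
Qed.

Lemma cos_diff (x y : R) : cos x - cos y = - 2 * sin ((x + y) / 2) * sin ((x - y) / 2).
Proof.
have -> : cos x = cos ((x + y) / 2 + (x - y) / 2) by congr cos; field.
have -> : cos y = cos ((x + y) / 2 - (x - y) / 2) by congr cos; field.
rewrite cosB cosD; ring.
Qed.

Lemma cheb_lip k (a b : R) : -1 <= a <= 1 -> -1 <= b <= 1 ->
  `|(cheb R k).[a] - (cheb R k).[b]| <= k%:R ^+ 2 * `|a - b|.
Proof.
move=> Ha Hb.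
have [_ ca] := acos_def Ha; have [_ cb] := acos_def Hb.
set al := acos a in ca; set be := acos b in cb.
rewrite -ca -cb !cheb_cos !cos_diff.
have -> : (k%:R * al + k%:R * be) / 2 = k%:R * ((al + be) / 2) by field.
have -> : (k%:R * al - k%:R * be) / 2 = k%:R * ((al - be) / 2) by field.
rewrite !normrM.
have h1 := sin_mul_le ((al + be) / 2) k.
have h2 := sin_mul_le ((al - be) / 2) k.
have h3 := ler_pM (normr_ge0 _) (normr_ge0 _) h1 h2.
rewrite normrN normr_nat.
move: h3; set S1 := `|sin (_ * ((al + be) / 2))|; set S2 := `|sin (_ * ((al - be) / 2))|.
move=> h3; nra.
Qed.
End Cheb.
Section Sp.
Variable R : realType.
Variable n : nat.
Implicit Types (E : 'M[R]_n.+1) (x : 'cV[R]_n.+1).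

Lemma sq_le_abs (a b : R) : `|a| <= b -> a ^+ 2 <= b ^+ 2.
Proof. by rewrite ler_norml => /andP[h1 h2]; nra. Qed.

Lemma cvnorm_ge0 x : 0 <= cvnorm x.
Proof. exact: sqrtr_ge0. Qed.

Lemma cvnorm_sq x : cvnorm x ^+ 2 = \sum_i x i 0 ^+ 2.
Proof. by rewrite /cvnorm sqr_sqrtr // sumr_ge0 // => i _; apply: sqr_ge0. Qed.

Lemma cvnorm1_coord x j : cvnorm x = 1 -> `|x j 0| <= 1.
Proof.
move=> h; have h2 : \sum_i x i 0 ^+ 2 = 1 by rewrite -cvnorm_sq h expr1n.
have : `|x j 0| ^+ 2 <= 1.
  rewrite real_normK ?num_real // -h2 (bigD1 j) //= lerDl sumr_ge0 // => i _; exact: sqr_ge0.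
by rewrite expr_le1.
Qed.

Definition spset E := [set cvnorm (E *m x) | x in [set x : 'cV[R]_n.+1 | cvnorm x = 1]].

Definition ebasis (j : 'I_n.+1) : 'cV[R]_n.+1 := \col_i (i == j)%:R.

Lemma cvnorm_ebasis j : cvnorm (ebasis j) = 1.
Proof.
rewrite /cvnorm (bigD1 j) //= big1 => [|i ij]; rewrite !mxE.
  by rewrite eqxx expr1n addr0 sqrtr1.
by rewrite (negbTE ij) expr0n.
Qed.

Lemma has_sup_spset E : has_sup (spset E).
Proof.
split; first by exists (cvnorm (E *m ebasis ord0)); exists (ebasis ord0) => //; apply: cvnorm_ebasis.
exists (Num.sqrt (\sum_i (\sum_j `|E i j|) ^+ 2)) => _ [x /= hx <-].
rewrite ler_sqrt; last by apply: sumr_ge0 => i _; apply: sqr_ge0.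
apply: ler_sum => i _; apply: sq_le_abs.
rewrite mxE; apply: (le_trans (ler_norm_sum _ _ _)); apply: ler_sum => j _.
by rewrite normrM -[X in _ <= X]mulr1; apply: ler_wpM2l => //; apply: cvnorm1_coord.
Qed.

Lemma spnorm_ub E x : cvnorm x = 1 -> cvnorm (E *m x) <= spnorm E.
Proof. by move=> hx; apply: sup_upper_bound (has_sup_spset E) _ _; exists x. Qed.

Lemma spnorm_ge0 E : 0 <= spnorm E.
Proof. have h := spnorm_ub E (cvnorm_ebasis ord0); exact: le_trans (cvnorm_ge0 _) h. Qed.

Lemma frob_le E : \sum_i \sum_j E i j ^+ 2 <= n.+1%:R * spnorm E ^+ 2.
Proof.
have -> : n.+1%:R * spnorm E ^+ 2 = \sum_(j < n.+1) spnorm E ^+ 2 by rewrite sumr_const card_ord mulr_natl.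
rewrite exchange_big /=.
apply: ler_sum => j _.
have -> : \sum_i E i j ^+ 2 = cvnorm (E *m ebasis j) ^+ 2.
  rewrite cvnorm_sq; apply: eq_bigr => i _; congr (_ ^+ 2).
  rewrite mxE (bigD1 j) //= big1 => [|k kj]; rewrite !mxE ?eqxx ?mulr1 ?addr0 //.
  by rewrite (negbTE kj) mulr0.
apply: sq_le_abs; rewrite ger0_norm ?cvnorm_ge0 //; exact: (spnorm_ub E (cvnorm_ebasis j)).
Qed.
End Sp.
Section Spec.
Variable R : realType.
Variable n : nat.
Local Notation C := (R[i]).
Local Notation iota := (real_complex R).

Lemma spec_rep (X : 'M[R]_n.+1) : X^T = X -> (forall a, eigenvalue X a -> -1 <= a <= 1) ->
  exists (M : 'M[C]_n.+1) (a : 'I_n.+1 -> R),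
   [/\ M \is unitarymx, (forall i, -1 <= a i <= 1),
   M *m map_mx iota X = diag_mx (\row_i iota (a i)) *m M &
   (forall p : {poly R}, \tr (horner_mx X p) = \sum_i p.[a i])].
Proof.
move=> hX hev.
set Xc := map_mx iota X.
have herm : Xc \is hermsymmx.
  apply/is_hermitianmxP; rewrite expr0 scale1r; apply/matrixP => i j; rewrite !mxE.
  have -> : X j i = X i j by rewrite -[in LHS]hX mxE.
  exact: (esym (conjc_real _)).
have /orthomx_spectralP Hsp := hermitian_normalmx herm.
have Mu := spectral_unitarymx Xc.
have Munit := spectral_unit Xc.
have dreal := hermitian_spectral_diag_real herm.
set M := spectralmx Xc in Hsp Mu Munit.
set d := spectral_diag Xc in Hsp dreal.
pose a i := complex.Re (d 0 i).
have da : d = \row_i iota (a i).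
  apply/rowP => i; rewrite mxE /a complexRe; symmetry; apply/Creal_ReP.
  by move/mxOverP : dreal; apply.
have MX : M *m Xc = diag_mx d *m M.
  by rewrite {1}Hsp !mulmxA mulmxV // mul1mx.
exists M, a; split => //.
- move=> i; apply: hev; rewrite eigenvalue_root_char -(fmorph_root iota).
  rewrite map_char_poly -eigenvalue_root_char; apply/eigenvalueP.
  exists (row i M).
    rewrite -row_mul MX mul_diag_mx; apply/rowP => j; rewrite !mxE da mxE.
    by [].
  apply/eqP => h0.
  have /unitarymxP/matrixP/(_ i i) := Mu.
  rewrite !mxE eqxx /= big1 => [|k _]; last first.
    by move/rowP: h0 => /(_ k); rewrite !mxE => ->; rewrite mul0r.
  by move/eqP; rewrite eq_sym oner_eq0.
- by rewrite -da.
- move=> p; apply: (@complexI R).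
  rewrite -trace_map_mx map_horner_mx -/Xc Hsp horner_mx_uconjC //.
  rewrite mxtrace_mulC !mulmxA mulmxV // mul1mx horner_mx_diag mxtrace_diag.
  rewrite rmorph_sum; apply: eq_bigr => i _; rewrite !mxE da mxE.
  exact: horner_map.
Qed.
End Spec.
Section CH.
Variable R : realType.
Local Notation C := (R[i]).
Local Notation iota := (real_complex R).
Definition rho (z : C) : R := complex.Re z ^+ 2 + complex.Im z ^+ 2.

Lemma rho_ge0 z : 0 <= rho z.
Proof. by rewrite /rho addr_ge0 // sqr_ge0. Qed.

Lemma Re_mulJ (z : C) : complex.Re (z * z^*) = rho z.
Proof. case: z => x y; rewrite /rho /=. ring. Qed.

Lemma Re_Jmul (z : C) : complex.Re (z^* * z) = rho z.
Proof. case: z => x y; rewrite /rho /=. ring. Qed.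

Lemma ReD (z w : C) : complex.Re (z + w) = complex.Re z + complex.Re w.
Proof. by case: z; case: w. Qed.

Lemma Re_sum (I : finType) (F : I -> C) : complex.Re (\sum_i F i) = \sum_i complex.Re (F i).
Proof.
apply: (big_ind2 (fun a b => complex.Re a = b)) => //.
by move=> ? ? ? ? <- <-; rewrite ReD.
Qed.

Lemma Re1 : complex.Re (1 : C) = 1. Proof. by []. Qed.

Lemma rho_iota_mul (c : R) (z : C) : rho (iota c * z) = c ^+ 2 * rho z.
Proof. case: z => x y; rewrite /rho /=. ring. Qed.

Lemma rho_iota (c : R) : rho (iota c) = c ^+ 2.
Proof. rewrite /rho /=. ring. Qed.
End CH.
Lemma amgm_final (R : realType) (Q F N s : R) : 0 < N -> 0 <= s -> 0 <= Q -> F <= N * s ^+ 2 ->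
  (forall t, 0 < t -> Q <= (t * N + F / t) / 2) -> Q <= N * s.
Proof.
move=> N0 s0 Q0 hF h.
have [sp|] := ltrP 0 s.
  apply: le_trans (h s sp) _.
  have : F / s <= N * s.
    by rewrite ler_pdivrMr // -mulrA -expr2.
  lra.
rewrite le_eqVlt => /orP[/eqP s00|]; last by rewrite ltNge s0.
subst s; rewrite mulr0.
have F0 : F <= 0 by move: hF; rewrite expr0n mulr0.
have [Qp|] := ltrP 0 Q; last by [].
have t0 : 0 < Q / N by apply: divr_gt0.
have := h _ t0.
have : F / (Q / N) <= 0 by apply: mulr_le0_ge0 => //; rewrite invr_ge0 ltW.
have -> : Q / N * N = Q by rewrite divfK // gt_eqF.
lra.
Qed.

Local Open Scope classical_set_scope.
Local Open Scope ring_scope.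
Local Open Scope sesquilinear_scope.
Local Open Scope ring_scope.

Lemma amgm_term (R : realType) (w t d : R) : 0 <= w -> 0 < t ->
  w * `|d| <= (t * w + d ^+ 2 * w / t) / 2.
Proof.
move=> w0 t0; rewrite -real_normK ?num_real //; set e := `|d|.
rewrite -subr_ge0.
have -> : (t * w + e ^+ 2 * w / t) / 2 - w * e = w * (t - e) ^+ 2 / (2 * t).
  by field; rewrite gt_eqF.
by apply: divr_ge0; [apply: mulr_ge0 => //; apply: sqr_ge0 | apply: mulr_ge0 => //; apply: ltW].
Qed.

Section Tr.
Variable R : realType.
Variable n : nat.
Local Notation C := (R[i]).
Local Notation iota := (real_complex R).

Lemma Re_tr_AAJ (A : 'M[C]_n.+1) :
  complex.Re (\tr (A *m A^t*)) = \sum_i \sum_l rho (A i l).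
Proof.
rewrite /mxtrace Re_sum; apply: eq_bigr => i _; rewrite mxE Re_sum.
by apply: eq_bigr => l _; rewrite !mxE Re_mulJ.
Qed.

Lemma unitary_sq (M : 'M[C]_n.+1) : M \is unitarymx -> M^t* *m M = 1%:M.
Proof. by move/unitarymxP; apply: mulmx1C. Qed.

Lemma unitary_rows (W : 'M[C]_n.+1) : W *m W^t* = 1%:M -> forall i, \sum_l rho (W i l) = 1.
Proof.
move=> /matrixP WW i; have := WW i i; rewrite !mxE eqxx mulr1n => h.
by rewrite -Re1 -h Re_sum; apply: eq_bigr => l _; rewrite !mxE Re_mulJ.
Qed.

Lemma unitary_cols (W : 'M[C]_n.+1) : W^t* *m W = 1%:M -> forall l, \sum_i rho (W i l) = 1.
Proof.
move=> /matrixP WW l; have := WW l l; rewrite !mxE eqxx mulr1n => h.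
by rewrite -Re1 -h Re_sum; apply: eq_bigr => i _; rewrite !mxE Re_Jmul.
Qed.

Lemma tr_unitary_inv (U V A : 'M[C]_n.+1) : U^t* *m U = 1%:M -> V^t* *m V = 1%:M ->
  \tr ((U *m A *m V^t*) *m (U *m A *m V^t*)^t*) = \tr (A *m A^t*).
Proof.
move=> hU hV.
rewrite !trmx_mul !map_mxM trmxCK.
rewrite !mulmxA -(mulmxA (U *m A) (V^t* ) V) hV mulmx1.
by rewrite mxtrace_mulC !mulmxA hU mul1mx.
Qed.

Lemma trace_lip (X Y : 'M[R]_n.+1) (p : {poly R}) (L : R) :
  X^T = X -> Y^T = Y ->
  (forall a, eigenvalue X a -> -1 <= a <= 1) ->
  (forall a, eigenvalue Y a -> -1 <= a <= 1) -> 0 <= L ->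
  (forall a b, -1 <= a <= 1 -> -1 <= b <= 1 -> `|p.[a] - p.[b]| <= L * `|a - b|) ->
  `|\tr (horner_mx X p) - \tr (horner_mx Y p)| <= n.+1%:R * L * spnorm (X - Y).
Proof.
move=> hX hY evX evY L0 hp.
have [M [a [Mu ha MX trX]]] := spec_rep hX evX.
have [N [b [Nu hb NY trY]]] := spec_rep hY evY.
rewrite trX trY.
have /unitarymxP MM := Mu.
have /unitarymxP NN := Nu.
have NN2 := unitary_sq Nu.
have MM2 := unitary_sq Mu.
have WW : (M *m N^t* ) *m (M *m N^t* )^t* = 1%:M.
  rewrite trmx_mul map_mxM trmxCK mulmxA -(mulmxA M (N^t* ) N) NN2 mulmx1 MM.
  by [].
have Wrow := unitary_rows WW.
have Wcol := unitary_cols (mulmx1C WW).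
have Gdef : M *m map_mx iota (X - Y) *m N^t* =
   diag_mx (\row_i iota (a i)) *m (M *m N^t* ) - (M *m N^t* ) *m diag_mx (\row_l iota (b l)).
  rewrite map_mxB mulmxBr mulmxBl; congr (_ - _).
    by rewrite MX -mulmxA.
  rewrite -{1}(mulmx1 M) -NN2 -!mulmxA; congr (_ *m (_ *m _)).
  by rewrite mulmxA NY -mulmxA NN mulmx1.
have Fsum : \sum_i \sum_l rho ((M *m map_mx iota (X - Y) *m N^t* ) i l)
    = \sum_i \sum_j (X - Y) i j ^+ 2.
  rewrite -Re_tr_AAJ tr_unitary_inv // Re_tr_AAJ.
  by apply: eq_bigr => i _; apply: eq_bigr => j _; rewrite mxE rho_iota.
move: Fsum; rewrite Gdef.
move: Wrow Wcol; set W := M *m N^t*; clearbody W => Wrow Wcol.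
set F := \sum_i \sum_j (X - Y) i j ^+ 2 => Fsum.
have rhoG : forall i l, rho ((diag_mx (\row_i iota (a i)) *m W - W *m diag_mx (\row_l iota (b l))) i l)
   = (a i - b l) ^+ 2 * rho (W i l).
  move=> i l; rewrite mul_diag_mx mul_mx_diag !mxE [W i l * _]mulrC -mulrBl -rmorphB.
  exact: rho_iota_mul.
have Hsplit : \sum_i p.[a i] - \sum_l p.[b l] = \sum_i \sum_l rho (W i l) * (p.[a i] - p.[b l]).
  have -> : \sum_i p.[a i] = \sum_i \sum_l rho (W i l) * p.[a i].
    by apply: eq_bigr => i _; rewrite -mulr_suml Wrow mul1r.
  have -> : \sum_l p.[b l] = \sum_i \sum_l rho (W i l) * p.[b l].
    rewrite exchange_big /=; apply: eq_bigr => l _; by rewrite -mulr_suml Wcol mul1r.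
  rewrite -sumrB; apply: eq_bigr => i _; rewrite -sumrB; apply: eq_bigr => l _.
  by rewrite mulrBr.
set Q := \sum_i \sum_l rho (W i l) * `|a i - b l|.
have HQ : `|\sum_i p.[a i] - \sum_l p.[b l]| <= L * Q.
  rewrite Hsplit /Q mulr_sumr; apply: (le_trans (ler_norm_sum _ _ _)).
  apply: ler_sum => i _; rewrite mulr_sumr; apply: (le_trans (ler_norm_sum _ _ _)).
  apply: ler_sum => l _; rewrite normrM ger0_norm ?rho_ge0 // mulrCA.
  by apply: ler_wpM2l; [apply: rho_ge0 | apply: hp].
have Q0 : 0 <= Q.
  by apply: sumr_ge0 => i _; apply: sumr_ge0 => l _; apply: mulr_ge0 => //; apply: rho_ge0.
have Wtot : \sum_i \sum_l rho (W i l) = n.+1%:R.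
  by rewrite (eq_bigr (fun=> 1)) ?sumr_const ?card_ord // => i _; apply: Wrow.
have HQ2 : Q <= n.+1%:R * spnorm (X - Y).
  apply: (amgm_final (F := F)) => //; [exact: spnorm_ge0 | exact: frob_le | move=> t t0].
  rewrite -Wtot -Fsum mulr_sumr [X in _ + X]mulr_suml -big_split /= mulr_suml /Q.
  apply: ler_sum => i _; rewrite mulr_sumr [X in _ + X]mulr_suml -big_split /= mulr_suml.
  apply: ler_sum => l _; rewrite rhoG.
  by apply: amgm_term => //; apply: rho_ge0.
apply: (le_trans HQ).
rewrite [_ * L]mulrC -mulrA; exact: ler_wpM2l.
Qed.
End Tr.

Local Open Scope classical_set_scope.
Local Open Scope ring_scope.
Section Phi.
Variable R : realType.
Variable K : nat.
Implicit Types (u v : 'rV[R]_K).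

Lemma rvnorm_ge0 u : 0 <= rvnorm u.
Proof. exact: sqrtr_ge0. Qed.

Lemma rvnorm_sq u : rvnorm u ^+ 2 = \sum_i u 0 i ^+ 2.
Proof. by rewrite /rvnorm sqr_sqrtr // sumr_ge0 // => i _; apply: sqr_ge0. Qed.

Lemma sqrt_le_of_sq (X Y : R) : 0 <= Y -> X <= Y ^+ 2 -> Num.sqrt X <= Y.
Proof.
move=> Y0 h; have [X0|X0] := lerP 0 X.
  by rewrite -(ger0_norm Y0) -sqrtr_sqr ler_sqrt // sqr_ge0.
by rewrite ler0_sqrtr // ltW.
Qed.

Lemma normalize_diff u v : 0 < rvnorm u -> 0 < rvnorm v ->
  rvnorm ((rvnorm u)^-1 *: u - (rvnorm v)^-1 *: v) <= 2 * rvnorm (u - v) / rvnorm u.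
Proof.
move=> a0 b0; set a := rvnorm u; set b := rvnorm v.
set c := \sum_i u 0 i * v 0 i.
have Su : \sum_i u 0 i ^+ 2 = a ^+ 2 by rewrite rvnorm_sq.
have Sv : \sum_i v 0 i ^+ 2 = b ^+ 2 by rewrite rvnorm_sq.
have E1 : forall (s1 s2 : R), \sum_i (s1 * u 0 i - s2 * v 0 i) ^+ 2
    = s1 ^+ 2 * a ^+ 2 - 2 * s1 * s2 * c + s2 ^+ 2 * b ^+ 2.
  move=> s1 s2; rewrite -Su -Sv /c !mulr_sumr -!sumrB -big_split /=.
  by apply: eq_bigr => i _; ring.
have CS1 : c <= a * b.
  have := E1 b a; have : 0 <= \sum_i (b * u 0 i - a * v 0 i) ^+ 2.
    by apply: sumr_ge0 => i _; apply: sqr_ge0.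
  move=> h1 h2; rewrite h2 in h1.
  have : 0 <= a * b * (2 * (a * b - c)) by nra.
  by rewrite pmulr_rge0 ?mulr_gt0 // pmulr_rge0 // subr_ge0.
have CS2 : - (a * b) <= c.
  have := E1 b (- a); have : 0 <= \sum_i (b * u 0 i - - a * v 0 i) ^+ 2.
    by apply: sumr_ge0 => i _; apply: sqr_ge0.
  move=> h1 h2; rewrite h2 in h1.
  have : 0 <= a * b * (2 * (a * b + c)) by nra.
  by rewrite pmulr_rge0 ?mulr_gt0 // pmulr_rge0 // => h; lra.
have Hd : \sum_i ((a^-1 *: u - b^-1 *: v) 0 i) ^+ 2 = 2 - 2 * (c / (a * b)).
  rewrite (eq_bigr (fun i => (a^-1 * u 0 i - b^-1 * v 0 i) ^+ 2)); last first.
    by move=> i _; rewrite !mxE.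
  rewrite E1; field; by rewrite !gt_eqF.
have Huv : \sum_i ((u - v) 0 i) ^+ 2 = a ^+ 2 - 2 * c + b ^+ 2.
  rewrite (eq_bigr (fun i => (1 * u 0 i - 1 * v 0 i) ^+ 2)); last first.
    by move=> i _; rewrite !mxE !mul1r.
  by rewrite E1; ring.
apply: sqrt_le_of_sq.
  by apply: divr_ge0; [apply: mulr_ge0; [| apply: rvnorm_ge0] | apply: ltW].
rewrite Hd expr_div_n exprMn rvnorm_sq Huv.
set x := c / (a * b); set t := b / a.
have x1 : x <= 1 by rewrite ler_pdivrMr ?mulr_gt0 // mul1r.
have x2 : -1 <= x by rewrite ler_pdivlMr ?mulr_gt0 // mulN1r.
have t0 : 0 <= t by apply: divr_ge0; apply: ltW.
have -> : 2 ^+ 2 * (a ^+ 2 - 2 * c + b ^+ 2) / a ^+ 2 = 4 * (1 - 2 * x * t + t ^+ 2).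
  rewrite /x /t; field; by rewrite !gt_eqF.
have h1 : 0 <= (1 + x) * (1 - t) ^+ 2 by apply: mulr_ge0; [lra | apply: sqr_ge0].
have h2 : 0 <= (1 - x) * (t ^+ 2 + 2 * t) by apply: mulr_ge0; [lra | nra].
nra.
Qed.
End Phi.

Local Open Scope classical_set_scope.
Local Open Scope ring_scope.
Section Eta.
Variable R : realType.

Lemma geom_sum (r : R) m : \sum_(k < m) r ^+ k.+1 * (1 - r) = r - r ^+ m.+1.
Proof.
elim: m => [|m IH]; first by rewrite big_ord0 expr1 subrr.
rewrite big_ord_recr /= IH [in RHS]exprS.
set y := r ^+ m.+1. ring.
Qed.

Lemma term_bound (eta : R) k : 0 < eta ->
  expR (- (2 * eta * k.+1%:R)) * k.+1%:R ^+ 4 <= 24 / eta ^+ 4 * expR (- eta) ^+ k.+1.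
Proof.
move=> e0; set x := eta * k.+1%:R.
have x0 : 0 < x by apply: mulr_gt0.
have hx : x ^+ 4 <= 24 * expR x.
  have := expR_ge1Dxn 3 (ltW x0).
  have -> : (3.+1)`!%:R = 24 :> R by [].
  move=> h; have : x ^+ 4 / 24 <= expR x by apply: le_trans h; rewrite lerDr.
  by rewrite ler_pdivrMr // mulrC.
have -> : expR (- eta) ^+ k.+1 = expR (- x) by rewrite -expRM_natl /x mulrN mulrC.
have -> : - (2 * eta * k.+1%:R) = - x + - x by rewrite /x; ring.
rewrite expRD.
have -> : k.+1%:R ^+ 4 = x ^+ 4 / eta ^+ 4.
  by rewrite /x exprMn mulrC mulKf // expf_neq0 // gt_eqF.
have ex : expR (- x) * expR x = 1 by rewrite -expRD addNr expR0.
have ep : 0 < expR (- x) := expR_gt0 _.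
have e4 : 0 < eta ^+ 4 by apply: exprn_gt0.
have H1 : expR (- x) * expR (- x) * x ^+ 4 <= 24 * expR (- x).
  apply: le_trans (_ : expR (- x) * expR (- x) * (24 * expR x) <= _).
    by apply: ler_wpM2l => //; apply: mulr_ge0; apply: ltW.
  have -> : expR (- x) * expR (- x) * (24 * expR x) = 24 * expR (- x) * (expR (- x) * expR x) by ring.
  by rewrite ex mulr1.
rewrite mulrA [24 / _ * _]mulrAC; apply: ler_wpM2r => //.
by rewrite invr_ge0 ltW.
Qed.

Lemma sum_bound (eta : R) K : 0 < eta ->
  \sum_(k < K) expR (- (2 * eta * k%:R)) * k%:R ^+ 4 <= 24 / eta ^+ 5.
Proof.
move=> e0; have e5 : 0 < eta ^+ 5 by apply: exprn_gt0.
case: K => [|m]; first by rewrite big_ord0; apply: divr_ge0 => //; apply: ltW.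
rewrite big_ord_recl /=.
rewrite expr0n mulr0 add0r.
set r := expR (- eta).
have r0 : 0 < r := expR_gt0 _.
have r1 : r < 1 by rewrite /r -expR0 ltr_expR ltrNl oppr0.
have hr : r * (1 + eta) <= 1.
  have := expR_ge1Dx eta; rewrite /r => h.
  have : expR (- eta) * expR eta = 1 by rewrite -expRD addNr expR0.
  move=> h2; rewrite -[X in _ <= X]h2; apply: ler_wpM2l => //; exact: ltW.
apply: le_trans (_ : \sum_(k < m) 24 / eta ^+ 4 * r ^+ k.+1 <= _).
  by apply: ler_sum => k _; rewrite /bump /= add1n; apply: term_bound.
rewrite -mulr_sumr.
have G : \sum_(k < m) r ^+ k.+1 <= 1 / eta.
  have := geom_sum r m; rewrite -mulr_suml => h.
  have hs : \sum_(k < m) r ^+ k.+1 <= r / (1 - r).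
    by rewrite ler_pdivlMr ?subr_gt0 // h lerBlDr lerDl; apply: exprn_ge0; apply: ltW.
  apply: le_trans hs _.
  rewrite ler_pdivrMr ?subr_gt0 // mulrC mulrA ler_pdivlMr //; lra.
have c0 : 0 <= 24 / eta ^+ 4 by apply: divr_ge0 => //; apply: exprn_ge0; apply: ltW.
apply: le_trans (ler_wpM2l c0 G) _.
have -> : 24 / eta ^+ 4 * (1 / eta) = 24 / eta ^+ 5 by field; rewrite gt_eqF.
by [].
Qed.
End Eta.

Local Open Scope classical_set_scope.
Local Open Scope ring_scope.

Lemma normalize_sym (R : realType) n (eps : R) (A : 'M[R]_n.+1) :
  is_symmetric A -> (normalize eps A)^T = normalize eps A.
Proof.
rewrite /is_symmetric => hA; apply/matrixP => i j; rewrite !mxE.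
have -> : A j i = A i j by rewrite -[in LHS]hA mxE.
by rewrite eq_sym.
Qed.

Lemma eta_pow (R : realType) (eta : R) : 0 < eta ->
  (eta `^ (- (5%:R / 2))) ^+ 2 = (eta ^+ 5)^-1.
Proof.
move=> e0.
rewrite -powR_mulrn ?powR_ge0 // -powRrM.
have -> : - (5%:R / 2) * 2%:R = - 5%:R :> R by field.
by rewrite powRN powR_mulrn // ltW.
Qed.

Theorem theorem3_aux :
  exists Cbig : nat,
  forall (R : realType) (n : nat) (eps eta : R) (A B : 'M[R]_n.+1),
    0 < eps -> 0 < eta ->
    is_symmetric A -> is_symmetric B ->
    (forall a, eigenvalue (normalize eps A) a -> -1 <= a <= 1) ->
    (forall a, eigenvalue (normalize eps B) a -> -1 <= a <= 1) ->
    exists CT : R, 0 <= CT /\ CT <= 2 /\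
      (forall k : nat,
         `|\tr (chebmx k (normalize eps A)) - \tr (chebmx k (normalize eps B))|
           <= n.+1%:R * CT * k%:R ^+ 2 * spnorm (normalize eps A - normalize eps B)) /\
      (forall K : nat, (1 <= K)%N ->
         let bound :=
           n.+1%:R / rvnorm (s_vec eps eta A K)
           * Num.sqrt (\sum_(k < K) expR (- (2 * eta * k%:R)) * CT ^+ 2 * k%:R ^+ 4)
           * spnorm (normalize eps A - normalize eps B) in
         rvnorm (phi eps eta A K - phi eps eta B K) <= bound /\
         bound <= Cbig%:R * n.+1%:R * eta `^ (- (5%:R / 2))
                    * spnorm (normalize eps A - normalize eps B)).
Proof.
exists 10%N => R n eps eta A B eps0 eta0 hA hB evA evB.
have symX := normalize_sym eps hA.
have symY := normalize_sym eps hB.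
set X := normalize eps A in symX evA *.
set Y := normalize eps B in symY evB *.
set s := spnorm (X - Y).
have s0 : 0 <= s by apply: spnorm_ge0.
have n0 : 0 < n.+1%:R :> R by [].
have P1 : forall k : nat, `|\tr (chebmx k X) - \tr (chebmx k Y)| <= n.+1%:R * k%:R ^+ 2 * s.
  move=> k; apply: (trace_lip (p := cheb R k) symX symY evA evB).
    by apply: exprn_ge0.
  by move=> a b ha hb; apply: cheb_lip.
exists 2; split; first by [].
split; first by [].
split.
  move=> k; apply: le_trans (P1 k) _.
  have h : 0 <= n.+1%:R * k%:R ^+ 2 * s by apply: mulr_ge0 => //; apply: mulr_ge0 => //; apply: exprn_ge0.
  lra.
move=> K K1 bound.
set u := s_vec eps eta A K.
set v := s_vec eps eta B K.
pose i0 : 'I_K := Ordinal K1.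
have s0u : forall M : 'M[R]_n.+1, s_vec eps eta M K 0 i0 = n.+1%:R.
  move=> M; rewrite mxE /s_coef /= mulr0 expR0 mul1r /chebmx cheb0 rmorph1.
  exact: mxtrace1.
have normlow : forall M : 'M[R]_n.+1, n.+1%:R <= rvnorm (s_vec eps eta M K).
  move=> M; rewrite /rvnorm (bigD1 i0) //= s0u.
  rewrite -[X in X <= _](@ger0_norm _ n.+1%:R) // -sqrtr_sqr ler_sqrt.
    by rewrite lerDl; apply: sumr_ge0 => i _; apply: sqr_ge0.
  by apply: addr_ge0; [apply: sqr_ge0 | apply: sumr_ge0 => i _; apply: sqr_ge0].
have un := normlow A; have vn := normlow B.
rewrite -/u in un; rewrite -/v in vn.
have u0 : 0 < rvnorm u by apply: lt_le_trans un.
have v0 : 0 < rvnorm v by apply: lt_le_trans vn.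
set S := \sum_(k < K) expR (- (2 * eta * k%:R)) * k%:R ^+ 4.
have S0 : 0 <= S by apply: sumr_ge0 => k _; apply: mulr_ge0; [apply: expR_ge0 | apply: exprn_ge0].
have Hdiff : rvnorm (u - v) <= n.+1%:R * s * Num.sqrt S.
  apply: sqrt_le_of_sq.
    by apply: mulr_ge0; [apply: mulr_ge0 => //; apply: ltW | apply: sqrtr_ge0].
  rewrite exprMn sqr_sqrtr // /S mulr_sumr; apply: ler_sum => k _.
  rewrite !mxE /s_coef -mulrBr.
  have -> : expR (- (2 * eta * k%:R)) = expR (- eta * k%:R) ^+ 2.
    by rewrite -expRM_natl; congr expR; ring.
  rewrite exprMn [_ * (expR _ ^+ 2 * _)]mulrCA; apply: ler_wpM2l; first by apply: exprn_ge0; apply: expR_ge0.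
  have -> : (n.+1%:R * s) ^+ 2 * k%:R ^+ 4 = (n.+1%:R * k%:R ^+ 2 * s) ^+ 2 by ring.
  by apply: sq_le_abs; apply: P1.
have Hphi : rvnorm (phi eps eta A K - phi eps eta B K) <= 2 * (n.+1%:R * s * Num.sqrt S) / rvnorm u.
  have -> : phi eps eta A K - phi eps eta B K = (rvnorm u)^-1 *: u - (rvnorm v)^-1 *: v by [].
  have h := @normalize_diff R K u v u0 v0.
  have hu : 0 <= (rvnorm u)^-1.
    rewrite invr_ge0. exact: (ltW u0).
  have h2 : 2 * rvnorm (u - v) <= 2 * (n.+1%:R * s * Num.sqrt S).
    apply: ler_wpM2l; [by [] | exact: Hdiff].
  have h3 := ler_wpM2r hu h2.
  exact: (le_trans h h3).
have Hbound : bound = n.+1%:R / rvnorm u * (2 * Num.sqrt S) * s.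
  rewrite /bound -/u; congr (_ * _ * _).
  have -> : \sum_(k < K) expR (- (2 * eta * k%:R)) * 2 ^+ 2 * k%:R ^+ 4 = 2 ^+ 2 * S.
    by rewrite /S mulr_sumr; apply: eq_bigr => k _; ring.
  by rewrite sqrtrM ?sqrtr_sqr ?ger0_norm //; apply: exprn_ge0.
clearbody bound.
split.
  rewrite Hbound.
  have -> : n.+1%:R / rvnorm u * (2 * Num.sqrt S) * s = 2 * (n.+1%:R * s * Num.sqrt S) / rvnorm u.
    ring.
  exact: Hphi.
rewrite Hbound.
set P := eta `^ (- (5%:R / 2)).
have P0 : 0 <= P by apply: powR_ge0.
have Sle : Num.sqrt S <= 5 * P.
  apply: sqrt_le_of_sq; first by apply: mulr_ge0.
  rewrite exprMn /P eta_pow //; apply: le_trans (sum_bound K eta0) _.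
  apply: ler_wpM2r; first by rewrite invr_ge0 exprn_ge0 // ltW.
  by rewrite -natrX ler_nat.
have nu : n.+1%:R / rvnorm u <= 1.
  rewrite ler_pdivrMr; last exact: u0.
  rewrite mul1r; exact: un.
have h1 : n.+1%:R / rvnorm u * (2 * Num.sqrt S) <= 10%:R * n.+1%:R * P.
  have q0 : 0 <= n.+1%:R / rvnorm u.
    apply: divr_ge0; [exact: (ltW n0) | exact: (ltW u0)].
  have z0 : 0 <= 2 * Num.sqrt S.
    apply: mulr_ge0; [exact: ler0n | exact: sqrtr_ge0].
  have h2 : 2 * Num.sqrt S <= 2 * (5 * P).
    apply: ler_wpM2l; [exact: ler0n | exact: Sle].
  have h3 := ler_pM q0 z0 nu h2.
  apply: (le_trans h3).
  have n1 : 1 <= n.+1%:R :> R by rewrite ler1n.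
  rewrite mul1r.
  have -> : 2 * (5 * P) = 10%:R * P by rewrite mulrA -natrM.
  rewrite -mulrA; apply: ler_wpM2l; first exact: ler0n.
  rewrite -[X in X <= _]mul1r; exact: (ler_wpM2r P0 n1).
exact: (ler_wpM2r s0 h1).
Qed.

End Helpers.

Theorem theorem3 :
  exists Cbig : nat,
  forall (R : realType) (n : nat) (eps eta : R) (A B : 'M[R]_n.+1),
    0 < eps -> 0 < eta ->
    is_symmetric A -> is_symmetric B ->
    (forall a, eigenvalue (normalize eps A) a -> -1 <= a <= 1) ->
    (forall a, eigenvalue (normalize eps B) a -> -1 <= a <= 1) ->
    exists CT : R, 0 <= CT /\ CT <= 2 /\
      (forall k : nat,
         `|\tr (chebmx k (normalize eps A)) - \tr (chebmx k (normalize eps B))|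
           <= n.+1%:R * CT * k%:R ^+ 2 * spnorm (normalize eps A - normalize eps B)) /\
      (forall K : nat, (1 <= K)%N ->
         let bound :=
           n.+1%:R / rvnorm (s_vec eps eta A K)
           * Num.sqrt (\sum_(k < K) expR (- (2 * eta * k%:R)) * CT ^+ 2 * k%:R ^+ 4)
           * spnorm (normalize eps A - normalize eps B) in
         rvnorm (phi eps eta A K - phi eps eta B K) <= bound /\
         bound <= Cbig%:R * n.+1%:R * eta `^ (- (5%:R / 2))
                    * spnorm (normalize eps A - normalize eps B)).
Proof. exact: Helpers.theorem3_aux. Qed.
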